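(* Let $G$ be a connected weighted graph and $d$ a positive integer. Up to isomorphism over $G$, there are finitely many unramified harmonic morphisms $\varphi:G'\to G$ of degree $d$ from connected weighted graphs $G'$.
   Context: A graph $G$ consists of a finite set $X(G)$, an idempotent root map $r:X(G)\to X(G)$ and an involution $\iota:X(G)\to X(G)$ fixing $r(X(G))$ pointwise. $V(G)=r(X(G))$ are the vertices, $H(G)=X(G)\setminus V(G)$ the half-edges; $\iota$-orbits of size 2 in $H(G)$ are edges, fixed points are legs. $T_vG=\{h\in H(G): r(h)=v\}$, $\mathrm{val}(v)=\#T_vG$. A weighted graph has $g:V(G)\to\mathbb{Z}_{\ge0}$; $\chi(v)=2-2g(v)-\mathrm{val}(v)$. A morphism $\varphi:G'\to G$ is a map $X(G')\to X(G)$ commuting with $r$ and $\iota$ sending each edge to an edge or a vertex. It is harmonic if equipped with $d_\varphi:X(G')\to\mathbb{Z}_{\ge0}$ such that $d_\varphi$ agrees on the two halves of an edge, $d_\varphi(h')=0$ iff $\varphi(h')$ is a vertex, and for each $v'\in V(G')$ and each $h\in T_{\varphi(v')}G$, $d_\varphi(v')=\sum_{h'\in T_{v'}G',\varphi(h')=h}d_\varphi(h')$. Its degree is $\sum_{\varphi(v')=v}d_\varphi(v')$ (independent of $v$ for connected $G$). It is finite if $d_\varphi>0$ on all half-edges, and unramified if it is finite and $d_\varphi(v')\chi(\varphi(v'))-\chi(v')=0$ for all $v'\in V(G')$. *)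

(* Defs.v *)
From mathcomp Require Import all_boot all_order all_algebra.
Set Implicit Arguments. Unset Strict Implicit. Unset Printing Implicit Defensive.
Import GRing.Theory Num.Theory.

Record graph := Graph {
  X : finType;
  r : X -> X;
  iota : X -> X;
  r_idem : forall x, r (r x) = r x;
  iota_invol : forall x, iota (iota x) = x;
  iota_fix : forall x, iota (r x) = r x }.

Definition is_vertex (G : graph) (x : X G) : bool := r x == x.
Definition is_half (G : graph) (x : X G) : bool := ~~ is_vertex x.
(* h is a half-edge belonging to an edge (iota-orbit of size 2) *)
Definition is_edge_half (G : graph) (x : X G) : bool := is_half x && (iota x != x).

Definition val (G : graph) (v : X G) : nat := #|[pred h | is_half h && (r h == v)]|.

Definition adj (G : graph) : rel (X G) :=
  fun x y => [exists h, is_half h && (r h == x) && (r (iota h) == y)].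
Definition connected (G : graph) : Prop :=
  (exists v : X G, is_vertex v) /\
  forall v w : X G, is_vertex v -> is_vertex w -> connect (@adj G) v w.

(* Weighted graph: genus function (only its values on vertices matter). *)
Record wgraph := WGraph { wg :> graph; genus : X wg -> nat }.

Definition euler_char (G : wgraph) (v : X G) : int :=
  2%:Z - 2%:Z * (genus v)%:Z - (val v)%:Z.

Record hmor (G : wgraph) := HMor {
  src : wgraph;
  phi : X src -> X G;
  dphi : X src -> nat }.
Arguments phi {G} _ _.
Arguments dphi {G} _ _.
Arguments src {G} _.

Definition is_morphism (G : wgraph) (m : hmor G) : Prop :=
  (forall x, phi m (r x) = r (phi m x)) /\
  (forall x, phi m (iota x) = iota (phi m x)) /\
  (forall h, is_edge_half h -> is_vertex (phi m h) || is_edge_half (phi m h)).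

Definition harmonic (G : wgraph) (m : hmor G) : Prop :=
  (forall h, is_edge_half h -> dphi m (iota h) = dphi m h) /\
  (forall h, is_half h -> (dphi m h == 0) = is_vertex (phi m h)) /\
  (forall v', is_vertex v' -> forall h : X G, is_half h -> r h = phi m v' ->
     dphi m v' = \sum_(h' : X (src m) | is_half h' && (r h' == v') && (phi m h' == h))
                    dphi m h').

Definition has_degree (G : wgraph) (m : hmor G) (d : nat) : Prop :=
  forall v : X G, is_vertex v ->
    \sum_(v' : X (src m) | is_vertex v' && (phi m v' == v)) dphi m v' = d.

Definition finite_mor (G : wgraph) (m : hmor G) : Prop :=
  forall h, is_half h -> 0 < dphi m h.

Definition unramified (G : wgraph) (m : hmor G) : Prop :=
  finite_mor m /\
  forall v', is_vertex v' ->
    ((dphi m v')%:Z * euler_char (phi m v') - euler_char v' = 0)%R.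

Definition iso_over (G : wgraph) (m1 m2 : hmor G) : Prop :=
  exists psi : X (src m1) -> X (src m2),
    bijective psi /\
    [/\ forall x, psi (r x) = r (psi x),
        forall x, psi (iota x) = iota (psi x),
        forall v, is_vertex v -> genus (psi v) = genus v,
        forall x, phi m2 (psi x) = phi m1 x &
        forall x, dphi m2 (psi x) = dphi m1 x].

(* Main.v *)
Require Import Defs.
From mathcomp Require Import all_boot all_order all_algebra.
From mathcomp Require Import zify ring.
From Stdlib Require Import Classical.
Set Implicit Arguments. Unset Strict Implicit. Unset Printing Implicit Defensive.

Lemma vert_r (g : graph) (x : X g) : is_vertex (r x).
Proof. by rewrite /is_vertex r_idem. Qed.

Lemma phi_vert (G : wgraph) (m : hmor G) : is_morphism m ->
  forall v, is_vertex v -> is_vertex (phi m v).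
Proof. by move=> [Hr _] v /eqP Hv; rewrite /is_vertex -Hr Hv. Qed.

Lemma phi_half (G : wgraph) (m : hmor G) : harmonic m -> finite_mor m ->
  forall h, is_half h -> is_half (phi m h).
Proof.
move=> [_ [H2 _]] Hf h Hh; move: (Hf h Hh).
by rewrite /is_half -H2 // lt0n.
Qed.

Lemma half_le (G : wgraph) (m : hmor G) : is_morphism m -> harmonic m -> finite_mor m ->
  forall h', is_half h' -> dphi m h' <= dphi m (r h').
Proof.
move=> Hm Hh Hf h' H'.
have [Hr _] := Hm.
have [_ [_ H3]] := Hh.
rewrite (H3 (r h') (vert_r h') (phi m h') (phi_half Hh Hf H') (esym (Hr h'))).
by rewrite (bigD1 h') /= ?H' ?eqxx // leq_addr.
Qed.

Lemma vert_le_d (G : wgraph) (m : hmor G) d : is_morphism m -> has_degree m d ->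
  forall v', is_vertex v' -> dphi m v' <= d.
Proof.
move=> Hm Hd v' Hv.
by rewrite -(Hd (phi m v') (phi_vert Hm Hv)) (bigD1 v') /= ?Hv ?eqxx // leq_addr.
Qed.

Definition valid (G : wgraph) (d : nat) (m : hmor G) :=
  [/\ connected (src m), is_morphism m, harmonic m, unramified m & has_degree m d].

Lemma vert_pos (G : wgraph) d (m : hmor G) : valid d m -> 0 < d ->
  forall v', is_vertex v' -> 0 < dphi m v'.
Proof.
move=> [[_ Hc] Hm Hh [Hf _] Hd] d0 v' Hv.
rewrite lt0n; apply/negP => /eqP H0.
have noh : forall h', is_half h' -> r h' != v'.
  move=> h' H'; apply/eqP => Er.
  have := half_le Hm Hh Hf H'; rewrite Er H0 leqn0 => /eqP E.
  by have := Hf h' H'; rewrite E.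
have alleq : forall w, is_vertex w -> w = v'.
  move=> w Hw; have /connectP [p Hp ->] := Hc v' w Hv Hw.
  case: p Hp => [//|y p] /= /andP [Hadj _].
  move/existsP: Hadj => [h /andP [/andP [H' /eqP Er] _]].
  by move: (noh h H'); rewrite Er eqxx.
have := Hd (phi m v') (phi_vert Hm Hv).
rewrite big1 => [E|v'' /andP [Hv'' _]]; first by move: d0; rewrite -E.
by rewrite (alleq v'' Hv'').
Qed.

Lemma sub_sum (I : finType) (P Q : pred I) (F : I -> nat) :
  \sum_(i | P i && Q i) F i <= \sum_(i | P i) F i.
Proof. by rewrite [X in _ <= X](bigID Q) /= leq_addr. Qed.

Lemma V_bound (G : wgraph) d (m : hmor G) : is_morphism m -> has_degree m d ->
  \sum_(v' : X (src m) | is_vertex v') dphi m v' <= #|X G| * d.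
Proof.
move=> Hm Hd.
rewrite (partition_big (phi m) (fun v => is_vertex v)) => [|v' Hv']; last exact: phi_vert.
rewrite (eq_bigr (fun _ => d)) => [|v Hv]; last exact: Hd.
apply: leq_trans (sub_sum predT _ _) _.
by rewrite sum_nat_const.
Qed.

Lemma H_bound (G : wgraph) (m : hmor G) : is_morphism m -> harmonic m -> finite_mor m ->
  \sum_(h' : X (src m) | is_half h') dphi m h' <=
  #|X G| * \sum_(v' : X (src m) | is_vertex v') dphi m v'.
Proof.
move=> Hm Hh Hf.
have [Hr _] := Hm. have [_ [_ H3]] := Hh.
rewrite (partition_big (fun h' => (r h', phi m h'))
   (fun p : X (src m) * X G => is_vertex p.1 && (is_half p.2 && (r p.2 == phi m p.1))))
   => [|h' H'] /=; last by rewrite vert_r phi_half // Hr eqxx.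
rewrite (eq_bigr (fun p => dphi m p.1)) => [|[a b] /= /andP [Ha /andP [Hb /eqP Hab]]]; last first.
  rewrite (H3 a Ha b Hb Hab); apply: eq_bigl => i.
  by rewrite xpair_eqE andbA.
apply: leq_trans (sub_sum _ _ _) _.
have -> : \sum_(p : X (src m) * X G | is_vertex p.1) dphi m p.1 =
  \sum_(v' : X (src m) | is_vertex v') \sum_(h : X G) dphi m v'.
  by rewrite pair_big_dep; apply: eq_bigl => p; rewrite andbT.
rewrite big_distrr /=; apply: leq_sum => i _.
by rewrite sum_nat_const mulnC.
Qed.

Lemma card_bound (G : wgraph) d (m : hmor G) : valid d m -> 0 < d ->
  #|X (src m)| <= #|X G| * d + #|X G| * (#|X G| * d).
Proof.
move=> Hv d0; have [_ Hm Hh [Hf _] Hd] := Hv.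
rewrite -sum1_card.
apply: (@leq_trans (\sum_(x : X (src m)) dphi m x)).
  apply: leq_sum => x _; case: (boolP (is_vertex x)) => Hx.
    exact: vert_pos Hv d0 x Hx.
  exact: Hf x Hx.
rewrite (bigID (fun x => is_vertex x)) /=.
apply: leq_add; first exact: V_bound.
apply: leq_trans (H_bound Hm Hh Hf) _.
by rewrite leq_mul2l V_bound ?orbT.
Qed.

Lemma genus_bound (G : wgraph) d (m : hmor G) : valid d m ->
  forall v', is_vertex v' ->
  @genus (src m) v' <= 1 + d * (\sum_(v : X G) genus v + #|X G|).
Proof.
move=> [_ Hm Hh [_ Hu] Hd] v' Hv.
have E := Hu v' Hv.
have hd := vert_le_d Hm Hd Hv.
have hg : genus (phi m v') <= \sum_(v : X G) genus v.
  by rewrite (bigD1 (phi m v')) //= leq_addr.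
have hval : Defs.val (phi m v') <= #|X G| by apply: max_card.
move: E; rewrite /euler_char.
set D := dphi m v'; set g1 := genus (phi m v'); set M := \sum_(v : X G) genus v.
set w := Defs.val (phi m v'); set g := genus v'; set w' := Defs.val v'.
have p1 : D * g1 <= d * M by apply: leq_mul.
have p2 : D * w <= d * #|X G| by apply: leq_mul.
move=> E.
have E' : (D%:Z * (2%:Z - 2%:Z * g1%:Z - w%:Z) = D%:Z * 2%:Z - 2%:Z * (D * g1)%:Z - (D * w)%:Z)%R.
  by rewrite !PoszM; ring.
rewrite E' in E.
lia.
Qed.

Definition code (G : wgraph) (m : hmor G) : seq (nat * nat * nat * nat * nat) :=
  [seq (index (r x) (enum (X (src m))), index (Defs.iota x) (enum (X (src m))),
        index (phi m x) (enum (X G)), dphi m x,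
        if is_vertex x then @genus (src m) x else 0) | x <- enum (X (src m))].

Lemma code_iso (G : wgraph) (m1 m2 : hmor G) :
  connected (src m1) -> connected (src m2) -> code m1 = code m2 -> iso_over m1 m2.
Proof.
move=> [[x0 _] _] [[y0 _] _] Hc.
set s1 := enum (X (src m1)); set s2 := enum (X (src m2)).
have Hsz : size s1 = size s2.
  by have := congr1 size Hc; rewrite !size_map.
pose psi x := nth y0 s2 (index x s1).
pose psi' y := nth x0 s1 (index y s2).
have ix1 : forall x, index x s1 < size s1 by move=> x; rewrite index_mem mem_enum.
have ix2 : forall y, index y s2 < size s2 by move=> y; rewrite index_mem mem_enum.
have key : forall x,
  (index (r x) s1, index (Defs.iota x) s1, index (phi m1 x) (enum (X G)), dphi m1 x,
        if is_vertex x then @genus (src m1) x else 0) =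
  (index (r (psi x)) s2, index (Defs.iota (psi x)) s2, index (phi m2 (psi x)) (enum (X G)),
    dphi m2 (psi x), if is_vertex (psi x) then @genus (src m2) (psi x) else 0).
  move=> x; have := congr1 (fun c => nth (0,0,0,0,0) c (index x s1)) Hc.
  rewrite /= (nth_map x0) // (nth_map y0) -?Hsz // nth_index ?mem_enum //.
have nthi2 : forall y, nth y0 s2 (index y s2) = y by move=> y; rewrite nth_index ?mem_enum.
have nthi1 : forall x, nth x0 s1 (index x s1) = x by move=> x; rewrite nth_index ?mem_enum.
have psiK : cancel psi psi'.
  move=> x; rewrite /psi' /psi index_uniq ?enum_uniq -?Hsz //.
have psiK' : cancel psi' psi.
  move=> y; rewrite /psi' /psi index_uniq ?enum_uniq ?Hsz //.
have Hr : forall x, psi (r x) = r (psi x).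
  by move=> x; case: (key x) => E1 _ _ _ _; rewrite /psi E1 nthi2.
exists psi; split; first by exists psi'.
split.
- exact: Hr.
- by move=> x; case: (key x) => _ E1 _ _ _; rewrite /psi E1 nthi2.
- move=> v Hv; case: (key v) => _ _ _ _.
  have Hpv : is_vertex (psi v).
    by move: Hv; rewrite /is_vertex => /eqP Ev; rewrite -Hr Ev.
  by rewrite Hv Hpv.
- move=> x; case: (key x) => _ _ E _ _.
  have M : forall g : X G, g \in enum (X G) by move=> g; rewrite mem_enum.
  by rewrite -[phi m2 (psi x)](nth_index (phi m1 x) (M _)) -E nth_index.
- by move=> x; case: (key x) => _ _ _ E _.
Qed.

Lemma finite_list (T : eqType) (A : seq T) n :
  exists L : seq (seq T), forall s, size s <= n -> all (mem A) s -> s \in L.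
Proof.
elim: n => [|n [L HL]].
  by exists [:: [::]] => [[|? ?]].
exists ([::] :: [seq a :: t | a <- A, t <- L]) => [[|a t]] //= Hs /andP [Ha Ht].
by rewrite inE; apply/orP; right; apply: allpairs_f => //; apply: HL.
Qed.

Lemma pick_reps (E : Type) (C : eqType) (P : E -> Prop) (c : E -> C) (L : seq C) :
  exists (n : nat) (f : 'I_n -> E), (forall i, P (f i)) /\
    forall e, P e -> c e \in L -> exists i, c (f i) = c e.
Proof.
elim: L => [|a L [n [f [Hf IH]]]].
  exists 0, (fun i : 'I_0 => False_rect E (Bool.diff_false_true (etrans (esym (ltn0 i)) (ltn_ord i)))).
  by split=> [[]|].
case: (classic (exists e, P e /\ c e = a)) => [[e0 [Pe0 Ee0]]|Hno].
  exists n.+1, (fun i : 'I_n.+1 => match unlift ord_max i with Some j => f j | None => e0 end).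
  split=> [i|e Pe].
    by case: (unlift ord_max i).
  rewrite inE => /orP [/eqP Ea|HL].
    by exists ord_max; rewrite unlift_none Ee0 Ea.
  have [j Hj] := IH e Pe HL.
  by exists (lift ord_max j); rewrite liftK.
exists n, f; split=> // e Pe; rewrite inE => /orP [/eqP Ea|HL]; last exact: IH.
by exfalso; apply: Hno; exists e.
Qed.

Theorem proposition2p21 (G : wgraph) (d : nat) :
  connected G -> 0 < d ->
  exists (n : nat) (f : 'I_n -> hmor G),
    forall m : hmor G,
      connected (src m) -> is_morphism m -> harmonic m -> unramified m ->
      has_degree m d ->
      exists i : 'I_n, iso_over m (f i).
Proof.
move=> _ d0.
pose N := #|X G| * d + #|X G| * (#|X G| * d).
pose Bg := 1 + d * (\sum_(v : X G) genus v + #|X G|).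
pose B := N + #|X G| + d + Bg + 1.
pose I := iota 0 B.
pose A := [seq (p, x) | p <- [seq (p, x) | p <- [seq (p, x) | p <- [seq (a, b) | a <- I, b <- I], x <- I], x <- I], x <- I].
have [L HL] := finite_list A N.
have [n [f [Hf Hall]]] := pick_reps (@valid G d) (@code G) L.
exists n, f => m Hc Hm Hh Hu Hd.
have Hv : valid d m by split.
have Hcard := card_bound Hv d0.
have [Hfin _] := Hu.
have inI : forall k, k < B -> k \in I by move=> k Hk; rewrite mem_iota.
have Hsz : size (code m) <= N by rewrite size_map -cardT.
have Hal : all (mem A) (code m).
  apply/allP => t /mapP [x _ ->].
  have hdx : dphi m x <= d.
    case: (boolP (is_vertex x)) => Hx; first exact: vert_le_d Hm Hd x Hx.
    apply: leq_trans (half_le Hm Hh Hfin Hx) _.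
    exact: vert_le_d Hm Hd _ (vert_r x).
  have hgx : (if is_vertex x then @genus (src m) x else 0) <= Bg.
    case: ifP => Hx //; exact: genus_bound Hv x Hx.
  have hr : forall y : X (src m), index y (enum (X (src m))) < #|X (src m)|.
    by move=> y; rewrite cardT index_mem mem_enum.
  have hp : index (phi m x) (enum (X G)) < #|X G|.
    by rewrite cardT index_mem mem_enum.
  have := hr (r x); have := hr (Defs.iota x) => h1 h2.
  apply: allpairs_f; last by apply: inI; rewrite /B; lia.
  apply: allpairs_f; last by apply: inI; rewrite /B; lia.
  apply: allpairs_f; last by apply: inI; rewrite /B; lia.
  apply: allpairs_f; apply: inI; rewrite /B; lia.
have [i Hi] := Hall m Hv (HL _ Hsz Hal).
exists i; apply: code_iso Hc _ (esym Hi).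
by have [] := Hf i.
Qed.
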